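(* Let $a,b$ be integers with $0<a<b$ and let $\gamma_1<\gamma_2<\cdots$ be the greedy dissociated sequence starting from $a,b$. For $n\ge1$ let $\mathscr S_n := \sum_{i=1}^n\gamma_i$, $\mathscr T_n := \mathscr S_n+1$, and $D_n := \left\{\sum_{i=1}^n\varepsilon_i\gamma_i:\ \varepsilon_i\in\{-1,0,1\}\right\}$. Then for every $n\ge 1$, $\mathscr T_n\notin D_n$. Consequently, $\gamma_{n+1}\le\mathscr T_n$ for all $n\ge 2$.
   Context: A set $\mathcal S\subseteq\mathbb N$ is dissociated if all of its finite subsets have different sums. The greedy dissociated sequence starting from $a,b$ is defined by $\gamma_1=a$, $\gamma_2=b$, and for $r\ge 3$, $\gamma_r$ is the smallest integer greater than $\gamma_{r-1}$ such that $\{\gamma_1,\dots,\gamma_r\}$ is dissociated. *)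

(* Defs.v *)
From HB Require Import structures.
From mathcomp Require Import all_boot all_order all_algebra.
From mathcomp Require Import finmap.
Set Implicit Arguments. Unset Strict Implicit. Unset Printing Implicit Defensive.
Import Order.TTheory GRing.Theory Num.Theory.
Local Open Scope fset_scope.

Definition dissociated (A : {fset nat}) : Prop :=
  forall S1 S2 : {fset nat}, S1 `<=` A -> S2 `<=` A ->
    (\sum_(x <- S1) x)%N = (\sum_(x <- S2) x)%N -> S1 = S2.

Definition first_terms (g : nat -> nat) (r : nat) : {fset nat} :=
  [fset g i | i in iota 1 r].

(* g is the greedy dissociated sequence starting from a, b (indices 1,2,...):
   g 1 = a, g 2 = b, and for r >= 3, g r is the smallest integer > g (r-1)
   such that {g 1, ..., g r} is dissociated. (g 0 is irrelevant.) *)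
Definition greedy_dissociated (a b : nat) (g : nat -> nat) : Prop :=
  g 1 = a /\ g 2 = b /\
  forall r, 3 <= r ->
    [/\ g r.-1 < g r,
        dissociated (first_terms g r) &
        forall m, g r.-1 < m -> m < g r ->
          ~ dissociated (first_terms g r.-1 `|` [fset m])].

Definition Dset (g : nat -> nat) (n : nat) (x : int) : Prop :=
  exists eps : nat -> int,
    (forall i, eps i \in [:: (-1)%R; 0%R; 1%R]) /\
    x = (\sum_(1 <= i < n.+1) eps i * (g i)%:Z)%R.

Definition Ssum (g : nat -> nat) (n : nat) : nat := \sum_(1 <= i < n.+1) g i.
Definition Tsum (g : nat -> nat) (n : nat) : nat := (Ssum g n).+1.

(* Main.v *)
Require Import Defs.
From HB Require Import structures.
From mathcomp Require Import all_boot all_order all_algebra.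
From mathcomp Require Import finmap.
Set Implicit Arguments. Unset Strict Implicit. Unset Printing Implicit Defensive.
Import Order.TTheory GRing.Theory Num.Theory.
Local Open Scope fset_scope.

Lemma sum_sub (S A : {fset nat}) : S `<=` A ->
  (\sum_(x <- S) x <= \sum_(x <- A) x)%N.
Proof.
move=> sSA; rewrite (big_fsetID _ (mem S) A) /=.
rewrite (_ : [fset x in A | x \in S] = S) ?leq_addr //.
apply/fsetP => x; rewrite !inE /=; apply/andP/idP => [[]//|xS].
by split=> //; apply: (fsubsetP sSA).
Qed.

Lemma sumU1 (A : {fset nat}) m : m \notin A ->
  (\sum_(x <- A `|` [fset m]) x = m + \sum_(x <- A) x)%N.
Proof. by move=> mA; rewrite fsetUC big_fsetU1. Qed.

Lemma sumU1_le (A : {fset nat}) m :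
  (\sum_(x <- A `|` [fset m]) x <= \sum_(x <- A) x + m)%N.
Proof.
case: (boolP (m \in A)) => mA.
  by rewrite (fsetUidPl _ _ _) ?leq_addr // fsub1set.
by rewrite sumU1 // addnC.
Qed.

Lemma diss_ext (A : {fset nat}) m : dissociated A ->
  (\sum_(x <- A) x < m)%N -> dissociated (A `|` [fset m]).
Proof.
move=> dA lt S1 S2 s1 s2 eq12.
have sub' : forall S, S `<=` A `|` [fset m] -> S `\ m `<=` A.
  move=> S sS; apply/fsubsetP => x; rewrite in_fsetD1 => /andP[xm xS].
  by move: (fsubsetP sS x xS); rewrite !inE (negbTE xm) orbF.
have dec : forall S, S `<=` A `|` [fset m] ->
   (\sum_(x <- S) x = (if m \in S then m else 0) + \sum_(x <- S `\ m) x)%N.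
  move=> S sS; case: ifP => mS; first by rewrite (big_fsetD1 _ mS).
  by rewrite add0n; apply: eq_fbigl => x; rewrite in_fsetD1; case: eqP => // ->; rewrite mS.
have bnd : forall S, S `<=` A `|` [fset m] -> (\sum_(x <- S `\ m) x < m)%N.
  by move=> S sS; apply: leq_ltn_trans (sum_sub (sub' S sS)) lt.
have rec : forall S, S `<=` A `|` [fset m] -> S = if m \in S then m |` (S `\ m) else S `\ m.
  move=> S sS; case: ifP => mS; first by rewrite fsetD1K.
  by apply/fsetP => x; rewrite in_fsetD1; case: eqP => // ->; rewrite mS.
move: eq12; rewrite (dec _ s1) (dec _ s2) => E.
rewrite (rec _ s1) (rec _ s2); move: E.
have b1 := bnd _ s1; have b2 := bnd _ s2.
case: (m \in S1); case: (m \in S2) => /=.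
- by move/eqP; rewrite eqn_add2l => /eqP /(dA _ _ (sub' _ s1) (sub' _ s2)) ->.
- by rewrite add0n => E; move: b2; rewrite -E ltnNge leq_addr.
- by rewrite add0n => E; move: b1; rewrite E ltnNge leq_addr.
- by rewrite !add0n => /(dA _ _ (sub' _ s1) (sub' _ s2)) ->.
Qed.

Lemma ft_S g n : first_terms g n.+1 = first_terms g n `|` [fset g n.+1].
Proof.
rewrite /first_terms -[n.+1]addn1 iotaD add1n.
apply/fsetP => x; rewrite in_fsetU in_fset1 addn1 /=; apply/imfsetP/orP.
- case=> i /=; rewrite mem_cat => /orP[iI|]; first by move=> ->; left; apply/imfsetP; exists i.
  by rewrite inE => /eqP -> ->; right.
- case=> [/imfsetP[i /= iI ->]|]; first by exists i => //; rewrite mem_cat iI.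
  by move=> /eqP ->; exists n.+1 => //; rewrite mem_cat inE eqxx orbT.
Qed.

Lemma ft0 g : first_terms g 0 = fset0.
Proof. by apply/fsetP => x; rewrite inE; apply/imfsetP => -[]. Qed.

Lemma ft_sum g n : (\sum_(x <- first_terms g n) x <= Ssum g n)%N.
Proof.
elim: n => [|n IH]; first by rewrite ft0 big_seq_fset0.
rewrite ft_S /Ssum big_nat_recr //=; apply: leq_trans (sumU1_le _ _) _.
by rewrite leq_add2r.
Qed.

Lemma diss0 : dissociated fset0.
Proof.
move=> S1 S2; rewrite !fsubset0 => /eqP -> /eqP -> //.
Qed.

Theorem lemma2 (a b : nat) (g : nat -> nat) :
  0 < a -> a < b -> greedy_dissociated a b g ->
  (forall n, 1 <= n -> ~ Dset g n (Tsum g n)%:Z) /\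
  (forall n, 2 <= n -> g n.+1 <= Tsum g n).
Proof.
move=> a0 ab [g1 [g2 gr]]; split.
  move=> n _ [eps [heps E]].
  have : ((Tsum g n)%:Z <= (Ssum g n)%:Z)%R.
    rewrite E /Ssum (big_morph Posz PoszD (erefl (Posz 0))).
    apply: ler_sum => i _; have := heps i; rewrite !inE.
    case/or3P => /eqP ->; rewrite ?mul1r ?mul0r ?mulN1r //.
    by rewrite -subr_ge0 opprK addr_ge0.
  by rewrite /Tsum lez_nat ltnn.
move=> n n2.
have dA : dissociated (first_terms g n).
  case: n n2 => [|[|[|n]]] // _; last by have [] := gr n.+3 isT.
  rewrite !ft_S ft0 fset0U.
  have d1 : dissociated [fset g 1].
    rewrite -(fset0U [fset g 1]); apply: diss_ext; first exact: diss0.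
    by rewrite (big_seq_fset0 (R:=nat)) g1.
  by apply: diss_ext => //; rewrite big_seq_fset1 g1 g2.
rewrite leqNgt; apply/negP => lt.
have [_ _ H] := gr n.+1 (n2 : 2 < n.+1).
apply: (H (Tsum g n)) => /=.
- rewrite /Tsum ltnS /Ssum (big_cat_nat _ (m:=1) (n:=n)) //= ?big_nat1 ?leq_addl //.
  by apply: leq_trans n2.
- exact: lt.
- by apply: diss_ext => //; rewrite /Tsum ltnS ft_sum.
Qed.
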